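(* Let $n$ be any positive integer. There exists a 2-layer transformer, with a suitable position embedding, that performs function evaluation for domain $[n]$ in the ''consecutive positions, permuted keys'' presentation. That is, for every $f:[n]\to[n]$, every permutation $\pi$ of $[n]$ and every $i^*\in[n]$, on the input $\pi(0),f(\pi(0)),\pi(1),f(\pi(1)),\dots,\pi(n-1),f(\pi(n-1)),i^*$ of length $2n+1$, it outputs $f(i^* )$. The transformer uses leftmost hard attention, one head per attention layer, embedding dimension $7$, $O(\log n)$ bits of precision, a residual connection in the first attention layer, and no MLP layer.
   Context: Notation: $[n]=\{0,\dots,n-1\}$. Transformer model (encoder-only, no masking, no layer normalization). A transformer of embedding dimension $d$ consists of three parts. - An input embedding sends position $i$ with token $x_i$ to $\mathbf{w}(x_i)+\mathbf{p}(i)\in\mathbb{R}^d$. The token embedding $\mathbf{w}$ and the position embedding $\mathbf{p}$ may be chosen freely. - Length-preserving layers follow. - The output is the index in $[n]$ maximizing $\mathbf{U}\mathbf{Y}[L-1]$, where $\mathbf{U}\in\mathbb{R}^{n\times d}$ and $\mathbf{Y}[L-1]$ is the final layer's vector at the last position. A single-head attention layer has $\mathbf{W}^Q,\mathbf{W}^K\in\mathbb{R}^{d_{hid}\times d}$ and $\mathbf{W}^V\in\mathbb{R}^{d\times d}$. It computes the scores $s[i,j]=(\mathbf{W}^Q\mathbf{X}[i])\cdot(\mathbf{W}^K\mathbf{X}[j])/\sqrt{d_{hid}}$. - In leftmost hard attention, $\alpha[i,j]=1$ for the smallest $j$ maximizing $s[i,j]$, and $0$ otherwise. - The layer output is $\sum_j\alpha[i,j]\mathbf{W}^V\mathbf{X}[j]$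 without a residual, or $\mathbf{X}[i]+\sum_j\alpha[i,j]\mathbf{W}^V\mathbf{X}[j]$ with a residual. A $k$-layer transformer has $k$ attention layers and any number of position-wise ReLU MLP layers. *)

(* Defs.v *)
From HB Require Import structures.
From mathcomp Require Import all_boot all_order all_algebra.
From mathcomp Require Import fingroup perm reals.
Set Implicit Arguments. Unset Strict Implicit. Unset Printing Implicit Defensive.
Import Order.TTheory GRing.Theory Num.Theory.
Local Open Scope ring_scope.

Section Transformer.
Variable R : realType.

(* leftmost argmax of a score vector indexed by 'I_k: the smallest index
   attaining the maximum (None only when k = 0). *)
Definition leftmost_argmax (k : nat) (s : 'I_k -> R) : option 'I_k :=
  [pick j | [forall l : 'I_k, s l <= s j] && [forall l : 'I_k, (l < j)%N ==> (s l < s j)]].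

Record attn_layer (d : nat) := AttnLayer {
  dhid : nat;
  WQ : 'M[R]_(dhid, d);
  WK : 'M[R]_(dhid, d);
  WV : 'M[R]_(d, d) }.

Definition query d (A : attn_layer d) (x : 'cV[R]_d) := WQ A *m x.
Definition key d (A : attn_layer d) (x : 'cV[R]_d) := WK A *m x.
Definition value d (A : attn_layer d) (x : 'cV[R]_d) := WV A *m x.

Definition score d L (A : attn_layer d) (X : 'I_L -> 'cV[R]_d) (i j : 'I_L) : R :=
  (\sum_(h < dhid A) query A (X i) h 0 * key A (X j) h 0) / Num.sqrt (dhid A)%:R.

Definition alpha d L (A : attn_layer d) (X : 'I_L -> 'cV[R]_d) (i j : 'I_L) : R :=
  (leftmost_argmax (score A X i) == Some j)%:R.

Definition attn_apply d L (res : bool) (A : attn_layer d) (X : 'I_L -> 'cV[R]_d)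
  (i : 'I_L) : 'cV[R]_d :=
  (if res then X i else 0) + \sum_j alpha A X i j *: value A (X j).

Definition fe_input (n : nat) (f : 'I_n -> 'I_n) (pi : {perm 'I_n}) (istar : 'I_n)
  : seq 'I_n :=
  flatten [seq [:: pi j; f (pi j)] | j <- enum 'I_n] ++ [:: istar].

Definition fe_token (n : nat) f pi istar (k : 'I_(n.*2).+1) : 'I_n :=
  nth istar (@fe_input n f pi istar) k.

Record transformer2 (n : nat) := Transformer2 {
  tok_emb : 'I_n -> 'cV[R]_7;
  pos_emb : 'I_(n.*2).+1 -> 'cV[R]_7;
  layer1 : attn_layer 7;
  layer2 : attn_layer 7;
  unemb : 'M[R]_(n, 7) }.

Section Run.
Variables (n : nat) (T : transformer2 n) (f : 'I_n -> 'I_n) (pi : {perm 'I_n})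
  (istar : 'I_n).

Definition X0 (k : 'I_(n.*2).+1) : 'cV[R]_7 :=
  tok_emb T (fe_token f pi istar k) + pos_emb T k.
Definition X1 := attn_apply true (layer1 T) X0.
Definition X2 := attn_apply false (layer2 T) X1.
Definition logits : 'cV[R]_n := unemb T *m X2 ord_max.
Definition output : option 'I_n := leftmost_argmax (fun m => logits m 0).
End Run.

(* precision: x is a fixed-point number with b integer bits and b fractional
   bits, i.e. x * 2^b is an integer and |x| <= 2^b. *)
Definition repr (b : nat) (x : R) : Prop :=
  (exists z : int, x * 2 ^+ b = z%:~R) /\ `|x| <= 2 ^+ b.

Definition repr_mx (b : nat) m k (M : 'M[R]_(m, k)) : Prop :=
  forall i j, repr b (M i j).

Definition layer_params_repr b d (A : attn_layer d) : Prop :=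
  [/\ repr_mx b (WQ A), repr_mx b (WK A) & repr_mx b (WV A)].

Definition layer_run_repr b d L (A : attn_layer d) (X : 'I_L -> 'cV[R]_d) : Prop :=
  forall i j, [/\ repr_mx b (query A (X i)), repr_mx b (key A (X i)),
                  repr_mx b (value A (X i)) & repr b (score A X i j)].

Definition precision_ok (b : nat) (n : nat) (T : transformer2 n) : Prop :=
  [/\ (forall t, repr_mx b (tok_emb T t)), (forall k, repr_mx b (pos_emb T k)),
      layer_params_repr b (layer1 T), layer_params_repr b (layer2 T)
    & repr_mx b (unemb T)] /\
  forall f pi istar,
  [/\ (forall k, repr_mx b (X0 T f pi istar k)),
      layer_run_repr b (layer1 T) (X0 T f pi istar),
      (forall k, repr_mx b (X1 T f pi istar k)),
      layer_run_repr b (layer2 T) (X1 T f pi istar)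
    & (forall k, repr_mx b (X2 T f pi istar k)) /\
      repr_mx b (logits T f pi istar)].

End Transformer.

(* Main.v *)
Require Import Defs.
From HB Require Import structures.
From mathcomp Require Import all_boot all_order all_algebra.
From mathcomp Require Import fingroup perm reals.
From mathcomp Require Import ring lra.
Import Order.TTheory GRing.Theory Num.Theory.
Local Open Scope ring_scope.

Section Gen.
Context {R : realType}.

Definition isint (x : R) := exists z : int, x = z%:~R.
Definition intb (B x : R) := isint x /\ `|x| <= B.
Definition intmx B {m k} (M : 'M[R]_(m,k)) := forall i j, intb B (M i j).

Lemma isint0 : isint 0. Proof. by exists 0. Qed.
Lemma isint1 : isint 1. Proof. by exists 1. Qed.
Lemma isint_nat (k : nat) : isint k%:R. Proof. by exists k; rewrite pmulrn. Qed.
Lemma isintN x : isint x -> isint (- x).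
Proof. by case=> z ->; exists (- z); rewrite mulrNz. Qed.
Lemma isintD x y : isint x -> isint y -> isint (x + y).
Proof. by case=> z -> [w ->]; exists (z + w); rewrite intrD. Qed.
Lemma isintM x y : isint x -> isint y -> isint (x * y).
Proof. by case=> z -> [w ->]; exists (z * w); rewrite intrM. Qed.
Lemma isintX x k : isint x -> isint (x ^+ k).
Proof. by case=> z ->; exists (z ^+ k); rewrite rmorphXn. Qed.

Lemma intb_le a b x : a <= b -> intb a x -> intb b x.
Proof. by move=> ab [ix xa]; split=> //; apply: le_trans ab. Qed.
Lemma intb_ge0 a x : intb a x -> 0 <= a.
Proof. by case=> _ h; apply: le_trans h. Qed.
Lemma intb0 a : 0 <= a -> intb a 0.
Proof. by move=> h; split; [apply: isint0| rewrite normr0]. Qed.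
Lemma intbD a b x y : intb a x -> intb b y -> intb (a + b) (x + y).
Proof.
move=> [ix xa] [iy yb]; split; first exact: isintD.
by apply: le_trans (ler_normD _ _) _; apply: lerD.
Qed.
Lemma intbM a b x y : intb a x -> intb b y -> intb (a * b) (x * y).
Proof.
move=> [ix xa] [iy yb]; split; first exact: isintM.
by rewrite normrM; apply: ler_pM.
Qed.
Lemma intb_sum k a (F : 'I_k -> R) : (forall i, intb a (F i)) ->
  intb (k%:R * a) (\sum_(i < k) F i).
Proof.
elim: k F => [|k IH] F HF.
  by rewrite big_ord0 mul0r; split; [apply: isint0 | rewrite normr0].
rewrite big_ord_recr /= mulrSr mulrDl mul1r.
apply: intbD; last exact: HF.
exact: (IH (fun i => F (widen_ord (leqnSn k) i))).
Qed.
Lemma intmx_mul m d p a b (A : 'M[R]_(m,d)) (B : 'M[R]_(d,p)) :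
  intmx a A -> intmx b B -> intmx (d%:R * (a * b)) (A *m B).
Proof.
move=> hA hB i j; rewrite mxE; apply: intb_sum => k; exact: intbM.
Qed.
Lemma intmx_add m p a b (A B : 'M[R]_(m,p)) :
  intmx a A -> intmx b B -> intmx (a + b) (A + B).
Proof. by move=> hA hB i j; rewrite mxE; apply: intbD. Qed.
Lemma intmx_le m p a b (A : 'M[R]_(m,p)) : a <= b -> intmx a A -> intmx b A.
Proof. by move=> ab h i j; apply: intb_le (h i j). Qed.
Lemma intmx0 m p a : 0 <= a -> intmx a (0 : 'M[R]_(m,p)).
Proof. by move=> h i j; rewrite mxE; apply: intb0. Qed.

Lemma repr_intb b B x : intb B x -> B <= 2 ^+ b -> Defs.repr b x.
Proof.
move=> [[z ->] zB] Bb; split; last exact: le_trans Bb.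
by exists (z * 2 ^+ b); rewrite intrM rmorphXn.
Qed.
Lemma repr_half b B x : intb B (x * 2) -> B <= 2 ^+ b -> (0 < b)%N -> Defs.repr b x.
Proof.
move=> [[z zE] zB] Bb; case: b Bb => // b Bb _; split.
  by exists (z * 2 ^+ b); rewrite intrM rmorphXn -zE exprS mulrA.
apply: le_trans Bb; apply: le_trans zB.
rewrite normrM (ger0_norm (_ : (0:R) <= 2)) //; have := normr_ge0 x; lra.
Qed.
Lemma reprmx_intmx b B m k (M : 'M[R]_(m,k)) : intmx B M -> B <= 2 ^+ b -> repr_mx b M.
Proof. by move=> h Bb i j; apply: repr_intb (h i j) Bb. Qed.

Lemma argmax_unique k (s : 'I_k -> R) J :
  (forall l, l != J -> s l < s J) -> leftmost_argmax s = Some J.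
Proof.
move=> Hs; rewrite /leftmost_argmax; case: pickP => [j /andP [/forallP H1 _] | H].
  congr Some; apply/eqP; apply: contraT => neq.
  by move: (H1 J); rewrite leNgt (Hs j neq).
move: (H J) => /negbT/negP; case; apply/andP; split; apply/forallP => l.
  by case: (eqVneq l J) => [->|lJ] //; apply/ltW/Hs.
apply/implyP => lJ; apply: Hs; apply/eqP => E; by rewrite E ltnn in lJ.
Qed.

Lemma attn_applyE d L res (A : attn_layer R d) (X : 'I_L -> 'cV[R]_d) i :
  attn_apply res A X i = (if res then X i else 0) +
   (match leftmost_argmax (score A X i) with Some j => value A (X j) | None => 0 end).
Proof.
rewrite /attn_apply /alpha; congr (_ + _).
case: leftmost_argmax => [j0|].
  rewrite (bigD1 j0) //= eqxx scale1r big1 ?addr0 // => j Hj.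
  by rewrite (_ : (Some j0 == Some j) = false) ?scale0r //; apply/eqP => -[E]; rewrite E eqxx in Hj.
by rewrite big1 // => j _; rewrite scale0r.
Qed.

Definition colf p (F : nat -> R) : 'cV[R]_p := \col_(c < p) F c.
Definition matf p q (G : nat -> nat -> R) : 'M[R]_(p, q) := \matrix_(h < p, c < q) G h c.

Lemma sum7 (F : nat -> R) : \sum_(c < 7) F c = F 0%N + F 1%N + F 2%N + F 3%N + F 4%N + F 5%N + F 6%N.
Proof. by rewrite !big_ord_recr big_ord0 /= add0r. Qed.
Lemma sum4 (F : nat -> R) : \sum_(c < 4) F c = F 0%N + F 1%N + F 2%N + F 3%N.
Proof. by rewrite !big_ord_recr big_ord0 /= add0r. Qed.

Lemma mulmx_colf p G F : matf p 7 G *m colf 7 F =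
  colf p (fun h => G h 0%N * F 0%N + G h 1%N * F 1%N + G h 2%N * F 2%N + G h 3%N * F 3%N
     + G h 4%N * F 4%N + G h 5%N * F 5%N + G h 6%N * F 6%N).
Proof.
apply/matrixP => h j; rewrite !mxE.
transitivity (\sum_(c < 7) (fun c : nat => G h c * F c) c).
  by apply: eq_bigr => c _; rewrite !mxE.
exact: (sum7 (fun c : nat => G h c * F c)).
Qed.
Lemma colfD p F G : colf p F + colf p G = colf p (fun c => F c + G c).
Proof. by apply/matrixP => i j; rewrite !mxE. Qed.
Lemma colfE p F (c : 'I_p) j : colf p F c j = F c.
Proof. by rewrite mxE. Qed.

Lemma sqrt4 : Num.sqrt (4%:R : R) = 2.
Proof. by rewrite (_ : 4%:R = 2 ^+ 2) ?sqrtr_sqr ?ger0_norm //; ring. Qed.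

Lemma intmx_colf p a F : (forall c, (c < p)%N -> intb a (F c)) -> intmx a (colf p F).
Proof. by move=> h i j; rewrite mxE; apply: h. Qed.
Lemma intmx_matf p q a G : (forall h c, (h < p)%N -> (c < q)%N -> intb a (G h c)) ->
  intmx a (matf p q G).
Proof. by move=> h i j; rewrite mxE; apply: h. Qed.

End Gen.
Arguments colf {R} p F.
Arguments matf {R} p q G.
Arguments sum4 {R} F.
Arguments sum7 {R} F.
Arguments isint {R} x.
Arguments intb {R} B x.
Arguments intmx {R} B {m k} M.

Section Constr.
Variable R : realType.
Variable n : nat.

Definition tokf (m c : nat) : R := match c with 3 => m%:R | 4 => m%:R ^+ 2 | _ => 0 end.
Definition posf (k c : nat) : R :=
  match c with 0 => 1 | 1 => k%:R | 2 => 2 * k%:R ^+ 2 + (odd k)%:R | 4 => (odd k)%:R | _ => 0 end.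
Definition G1Q (h c : nat) : R := match h, c with 0,0 => -4 | 0,1 => 4 | 1,0 => -1 | _,_ => 0 end.
Definition G1K (h c : nat) : R := match h, c with 0,1 => 1 | 1,2 => 1 | _,_ => 0 end.
Definition G1V (h c : nat) : R := match h, c with 5,3 => 1 | 6,4 => 1 | _,_ => 0 end.
Definition G2Q (h c : nat) : R :=
  match h, c with 0,3 => (8 * n)%:R | 1,0 => (4 * n)%:R | 2,0 => 1 | _,_ => 0 end.
Definition G2K (h c : nat) : R := match h, c with 0,5 => 1 | 1,6 => -1 | 2,1 => 1 | _,_ => 0 end.
Definition G2V (h c : nat) : R := match h, c with 0,0 => 1 | 1,3 => 1 | _,_ => 0 end.
Definition GU (m c : nat) : R := match c with 0 => - m%:R ^+ 2 | 1 => 2 * m%:R | _ => 0 end.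

Definition lay1 : attn_layer R 7 :=
  @AttnLayer R 7 4 (matf 4 7 G1Q) (matf 4 7 G1K) (matf 7 7 G1V).
Definition lay2 : attn_layer R 7 :=
  @AttnLayer R 7 4 (matf 4 7 G2Q) (matf 4 7 G2K) (matf 7 7 G2V).
Definition TT : transformer2 R n :=
  @Transformer2 R n (fun t => colf 7 (tokf t)) (fun k => colf 7 (posf k)) lay1 lay2 (matf n 7 GU).

Lemma dot4 (F G : nat -> R) : \sum_(h < 4) colf 4 F h 0 * colf 4 G h 0 = F 0%N * G 0%N + F 1%N * G 1%N + F 2%N * G 2%N + F 3%N * G 3%N.
Proof.
transitivity (\sum_(h < 4) (fun h : nat => F h * G h) h).
  by apply: eq_bigr => h _; rewrite !mxE.
exact: (sum4 (fun h : nat => F h * G h)).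
Qed.

Lemma score1E L (X : 'I_L -> 'cV[R]_7) (xf : 'I_L -> nat -> R)
  (HX : forall k, X k = colf 7 (xf k)) i j :
  score lay1 X i j = ((4 * xf i 1%N - 4 * xf i 0%N) * xf j 1%N - xf i 0%N * xf j 2%N) / 2.
Proof.
rewrite /score /query /key /= !HX !mulmx_colf dot4 sqrt4 /G1Q /G1K /=.
congr (_ / _); ring.
Qed.

Lemma score2E L (X : 'I_L -> 'cV[R]_7) (xf : 'I_L -> nat -> R)
  (HX : forall k, X k = colf 7 (xf k)) i j :
  score lay2 X i j = ((8 * n)%:R * xf i 3%N * xf j 5%N - (4 * n)%:R * xf i 0%N * xf j 6%N
     + xf i 0%N * xf j 1%N) / 2.
Proof.
rewrite /score /query /key /= !HX !mulmx_colf dot4 sqrt4 /G2Q /G2K /=.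
congr (_ / _); ring.
Qed.

End Constr.

Lemma size_flat2 (T I : Type) (a b : I -> T) (s : seq I) :
  size (flatten [seq [:: a j; b j] | j <- s]) = (size s).*2.
Proof. by elim: s => //= x s IH; rewrite IH doubleS. Qed.

Lemma nth_flat2 (T I : Type) (x0 : T) (y0 : I) (a b : I -> T) (s : seq I) k :
  (k < (size s).*2)%N ->
  nth x0 (flatten [seq [:: a j; b j] | j <- s]) k = (if odd k then b else a) (nth y0 s k./2).
Proof.
elim: s k => [|x s IH] [|[|k]] //= Hk.
by rewrite IH // negbK.
Qed.

Section Tok.
Variables (n : nat) (f : 'I_n -> 'I_n) (pi : {perm 'I_n}) (istar : 'I_n).

Lemma tok_even (k : 'I_(n.*2).+1) (j : 'I_n) : val k = j.*2 -> fe_token f pi istar k = pi j.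
Proof.
move=> kE; rewrite /fe_token /fe_input nth_cat size_flat2 size_enum_ord kE ltn_double ltn_ord.
rewrite (@nth_flat2 _ _ _ j) ?size_enum_ord ?ltn_double // odd_double doubleK.
by congr (pi _); apply: val_inj; rewrite /= nth_enum_ord.
Qed.

Lemma tok_odd (k : 'I_(n.*2).+1) (j : 'I_n) : val k = j.*2.+1 -> fe_token f pi istar k = f (pi j).
Proof.
move=> kE; rewrite /fe_token /fe_input nth_cat size_flat2 size_enum_ord kE.
have hj : (j.*2.+1 < n.*2)%N by rewrite -doubleS leq_double ltn_ord.
rewrite hj (@nth_flat2 _ _ _ j) ?size_enum_ord //= odd_double /= uphalf_double.
by congr (f (pi _)); apply: val_inj; rewrite /= nth_enum_ord.
Qed.

Lemma tok_last (k : 'I_(n.*2).+1) : val k = n.*2 -> fe_token f pi istar k = istar.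
Proof.
move=> kE; rewrite /fe_token /fe_input nth_cat size_flat2 size_enum_ord kE ltnn subnn.
done.
Qed.
End Tok.

Lemma sq_ge1 (R : realType) (a b : nat) : a != b -> 1 <= (a%:R - b%:R) ^+ 2 :> R.
Proof.
rewrite neq_ltn => /orP [] h.
  have : (a.+1%:R <= b%:R :> R) by rewrite ler_nat.
  rewrite -natr1 => h'; nra.
have : (b.+1%:R <= a%:R :> R) by rewrite ler_nat.
rewrite -natr1 => h'; nra.
Qed.

Section Run.
Variable R : realType.
Variables (n : nat) (f : 'I_n -> 'I_n) (pi : {perm 'I_n}) (istar : 'I_n).
Hypothesis n0 : (0 < n)%N.

Let L := (n.*2).+1.
Definition tk (k : 'I_L) : nat := val (fe_token f pi istar k).
Definition x0f (k : 'I_L) (c : nat) : R := tokf R (tk k) c + posf R k c.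

Lemma X0E k : X0 (TT R n) f pi istar k = colf 7 (x0f k).
Proof. by rewrite /X0 /= colfD. Qed.

Definition tpos (i : 'I_L) : 'I_L := Ordinal (leq_ltn_trans (leq_pred i) (ltn_ord i)).

Lemma arg1 i : leftmost_argmax (score (lay1 R) (X0 (TT R n) f pi istar) i) = Some (tpos i).
Proof.
apply: argmax_unique => l hl.
rewrite !(@score1E R _ _ _ X0E) /x0f /tokf /posf /= !add0r.
have o1 : forall k : nat, 0 <= (odd k)%:R :> R /\ (odd k)%:R <= 1 :> R.
  by move=> k; case: (odd k) => /=; split; lra.
have [oa ob] := o1 l; have [oc od] := o1 (val i).-1.
have hne : nat_of_ord l != (nat_of_ord i).-1 by apply: contra hl => /eqP E; apply/eqP/val_inj.
have := @sq_ge1 R _ _ hne.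
move: hne oc od.
have [->|[I ->]] : nat_of_ord i = 0%N \/ exists I, nat_of_ord i = I.+1.
  by case: (nat_of_ord i) => [|I]; [left|right; exists I].
  move=> /= hne oc od hsq.
  have : 1 <= (nat_of_ord l)%:R :> R by rewrite ler1n lt0n.
  move=> h1; nra.
move=> /= hne oc od hsq.
have hI : (I.+1)%:R = I%:R + 1 :> R by rewrite natr1.
rewrite ltr_pM2r ?invr_gt0 // hI; have [oc2 od2] := o1 I; nra.
Qed.

Definition x1f (k : 'I_L) (c : nat) : R :=
  x0f k c + (G1V R c 0 * x0f (tpos k) 0 + G1V R c 1 * x0f (tpos k) 1 + G1V R c 2 * x0f (tpos k) 2
   + G1V R c 3 * x0f (tpos k) 3 + G1V R c 4 * x0f (tpos k) 4 + G1V R c 5 * x0f (tpos k) 5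
   + G1V R c 6 * x0f (tpos k) 6).

Lemma X1E k : X1 (TT R n) f pi istar k = colf 7 (x1f k).
Proof.
by rewrite /X1 attn_applyE arg1 /value /= !X0E /lay1 /= mulmx_colf colfD.
Qed.

Lemma x1f0 k : x1f k 0 = 1. Proof. rewrite /x1f /x0f /tokf /posf /G1V /=; ring. Qed.
Lemma x1f1 k : x1f k 1 = (val k)%:R. Proof. rewrite /x1f /x0f /tokf /posf /G1V /=; ring. Qed.
Lemma x1f3 k : x1f k 3 = (tk k)%:R. Proof. rewrite /x1f /x0f /tokf /posf /G1V /=; ring. Qed.
Lemma x1f5 k : x1f k 5 = (tk (tpos k))%:R. Proof. rewrite /x1f /x0f /tokf /posf /G1V /=; ring. Qed.
Lemma x1f6 k : x1f k 6 = (tk (tpos k))%:R ^+ 2 + (odd (tpos k))%:R.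
Proof. rewrite /x1f /x0f /tokf /posf /G1V /=; ring. Qed.


Definition j0 : 'I_n := (pi^-1)%g istar.
Lemma pij0 : pi j0 = istar. Proof. exact: permKV. Qed.
Lemma Jlt : (j0.*2.+1 < L)%N. Proof. by rewrite /L ltnS ltn_double. Qed.
Definition Jpos : 'I_L := Ordinal Jlt.

Lemma tk_last : tk ord_max = istar.
Proof. by rewrite /tk (@tok_last n f pi istar ord_max). Qed.
Lemma tk_tJ : tk (tpos Jpos) = istar.
Proof. by rewrite /tk (@tok_even n f pi istar _ j0) ?pij0. Qed.
Lemma tk_J : tk Jpos = f istar.
Proof. by rewrite /tk (@tok_odd n f pi istar _ j0) ?pij0. Qed.

Lemma X1E' : forall k, X1 (TT R n) f pi istar k = colf 7 (x1f k).
Proof. exact: X1E. Qed.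

Lemma arg2 : leftmost_argmax (score (lay2 R n) (X1 (TT R n) f pi istar) ord_max) = Some Jpos.
Proof.
apply: argmax_unique => l hl.
rewrite !(@score2E R n _ _ _ X1E') !x1f0 !x1f1 !x1f3 !x1f5 !x1f6 tk_last tk_tJ.
rewrite (_ : odd (tpos Jpos) = false); last by rewrite /= odd_double.
rewrite ltr_pM2r ?invr_gt0 // !natrM.
have n1 : 1 <= n%:R :> R by rewrite ler1n.
have hl2 : (nat_of_ord l)%:R <= 2 * n%:R :> R.
  by rewrite -natrM ler_nat mul2n -ltnS ltn_ord.
have hJ0 : 0 <= (j0.*2.+1)%:R :> R by [].
have hJ : 1 <= (j0.*2.+1)%:R :> R by rewrite ler1n.
set c := tk (tpos l); set a := nat_of_ord istar.
case: (boolP ((c != a) || odd (tpos l))) => H.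
  have H1 : 1 <= (c%:R - a%:R) ^+ 2 + (odd (tpos l))%:R :> R.
    case/orP: H => H.
      have := @sq_ge1 R _ _ H; case: (odd _) => /=; lra.
    rewrite H /=; have := sqr_ge0 (c%:R - a%:R : R); lra.
  have h := ler_wpM2l (ler0n R n) H1.
  simpl; nra.
move: H; rewrite negb_or negbK => /andP [/eqP ca /negbTE ol].
rewrite ol ca /=.
have [l0|lpos] := eqVneq (nat_of_ord l) 0%N.
  rewrite l0 /=; nra.
exfalso; move/negP: hl; apply; apply/eqP/val_inj => /=.
have ltl : ((nat_of_ord l).-1 < n.*2)%N.
  by rewrite -ltnS prednK ?lt0n // -ltnS ltn_ord.
have hj : ((nat_of_ord l).-1./2 < n)%N by rewrite -ltn_double; apply: leq_ltn_trans ltl; rewrite -{2}(odd_double_half (nat_of_ord l).-1) leq_addl.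
have ev : (nat_of_ord l).-1 = ((nat_of_ord l).-1./2).*2.
  have := odd_double_half (nat_of_ord l).-1; rewrite /= in ol; rewrite ol add0n => E.
  by symmetry.
have := @tok_even n f pi istar (tpos l) (Ordinal hj) ev.
move: ca; rewrite /c /a /tk => ca tE; rewrite tE in ca.
have pe : pi (Ordinal hj) = istar by apply: val_inj.
have : Ordinal hj = j0 by rewrite /j0 -pe permK.
move=> /(congr1 val) /= e; rewrite e in ev.
by rewrite -ev prednK // lt0n.
Qed.

Lemma outE : output (TT R n) f pi istar = Some (f istar).
Proof.
rewrite /output /logits /X2 attn_applyE arg2 /value /= add0r X1E /lay2 /= !mulmx_colf.
apply: argmax_unique => m hm; rewrite !colfE !x1f0 !x1f3 tk_J /GU /G2V /=.
have := @sq_ge1 R (nat_of_ord m) (nat_of_ord (f istar)) hm.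
nra.
Qed.
End Run.

Section Prec.
Variable R : realType.

Lemma layer_run_ok b (BB : R) (A : attn_layer R 7) L (X : 'I_L -> 'cV[R]_7) wq wk wv xb :
  dhid A = 4%N -> intmx wq (WQ A) -> intmx wk (WK A) -> intmx wv (WV A) ->
  (forall k, intmx xb (X k)) ->
  7%:R * (wq * xb) <= BB -> 7%:R * (wk * xb) <= BB -> 7%:R * (wv * xb) <= BB ->
  4%:R * ((7%:R * (wq * xb)) * (7%:R * (wk * xb))) <= BB -> BB <= 2 ^+ b -> (0 < b)%N ->
  layer_run_repr b A X.
Proof.
move=> hd hq hk hv hX b1 b2 b3 b4 Bb b0 i j.
have hQ : forall k, intmx (7%:R * (wq * xb)) (query A (X k)) by move=> k; apply: intmx_mul.
have hK : forall k, intmx (7%:R * (wk * xb)) (key A (X k)) by move=> k; apply: intmx_mul.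
have hV : forall k, intmx (7%:R * (wv * xb)) (value A (X k)) by move=> k; apply: intmx_mul.
split.
- by apply: reprmx_intmx Bb; apply: intmx_le (hQ i).
- by apply: reprmx_intmx Bb; apply: intmx_le (hK i).
- by apply: reprmx_intmx Bb; apply: intmx_le (hV i).
apply: (@repr_half R b BB) => //.
rewrite /score (_ : Num.sqrt (dhid A)%:R = 2); last by rewrite hd sqrt4.
have h2 : (2 : R) != 0 by rewrite pnatr_eq0.
rewrite divfK //.

apply: (@intb_le R _ _ _ b4).
have -> : (4%:R : R) = (dhid A)%:R by rewrite hd.
apply: intb_sum => h; apply: intbM; [exact: hQ | exact: hK].
Qed.

Lemma intmx_match L d (A : attn_layer R d) (X : 'I_L -> 'cV[R]_d) a (o : option 'I_L) :
  0 <= a -> (forall k, intmx a (value A (X k))) ->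
  intmx a (match o with Some j => value A (X j) | None => 0 end).
Proof. by move=> a0 h; case: o => [j|]; [apply: h | apply: intmx0]. Qed.

Ltac isint_tac := repeat first [apply: isint0 | apply: isint1 | apply: isintN | apply: isintD
  | apply: isintM | apply: isintX | apply: isint_nat].

Lemma natpow_le (nN : R) k : 1 <= nN -> (k <= 5)%N -> nN ^+ k <= nN ^+ 5.
Proof. by move=> h1 hk; apply: (ler_weXn2l h1). Qed.


Ltac intb_solve := split; [isint_tac | rewrite ?natrM ler_norml; apply/andP; split; lra].

Section W.
Variables (n : nat) (nN : R).
Hypothesis nNE : nN = n%:R.
Hypothesis n1 : 1 <= nN.
Lemma nsq : nN <= nN ^+ 2.
Proof. have N1 := n1; rewrite expr2 -subr_ge0 (_ : nN * nN - nN = nN * (nN - 1)); [apply: mulr_ge0; lra | ring]. Qed.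

Lemma hQ1 : intmx 4 (matf 4 7 (G1Q R)).
Proof.
apply: intmx_matf => h c hh hc.
by do 4?[case: h hh => [|h] hh]; do 7?[case: c hc => [|c] hc] => //=; intb_solve.
Qed.
Lemma hK1 : intmx 1 (matf 4 7 (G1K R)).
Proof.
apply: intmx_matf => h c hh hc.
by do 4?[case: h hh => [|h] hh]; do 7?[case: c hc => [|c] hc] => //=; intb_solve.
Qed.
Lemma hV1 : intmx 1 (matf 7 7 (G1V R)).
Proof.
apply: intmx_matf => h c hh hc.
by do 7?[case: h hh => [|h] hh]; do 7?[case: c hc => [|c] hc] => //=; intb_solve.
Qed.
Lemma hQ2 : intmx (8 * nN) (matf 4 7 (G2Q R n)).
Proof.
have N1 := n1; apply: intmx_matf => h c hh hc; rewrite nNE in N1 *.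
by do 4?[case: h hh => [|h] hh]; do 7?[case: c hc => [|c] hc] => //=; intb_solve.
Qed.
Lemma hK2 : intmx 1 (matf 4 7 (G2K R)).
Proof.
apply: intmx_matf => h c hh hc.
by do 4?[case: h hh => [|h] hh]; do 7?[case: c hc => [|c] hc] => //=; intb_solve.
Qed.
Lemma hV2 : intmx 1 (matf 7 7 (G2V R)).
Proof.
apply: intmx_matf => h c hh hc.
by do 7?[case: h hh => [|h] hh]; do 7?[case: c hc => [|c] hc] => //=; intb_solve.
Qed.
Lemma hU : intmx (2 * nN ^+ 2) (matf n 7 (GU R)).
Proof.
have N1 := n1; apply: intmx_matf => m c hm hc.
have hm' : m%:R + 1 <= nN by rewrite nNE natr1 ler_nat.
have m0 : 0 <= m%:R :> R by [].
have msq : m%:R ^+ 2 <= nN ^+ 2 :> R by rewrite ler_pXn2r ?nnegrE //; lra.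
have := nsq.
have := sqr_ge0 (m%:R : R).
by do 7?[case: c hc => [|c] hc] => //= ? ?; intb_solve.
Qed.
Lemma hTok (t : 'I_n) : intmx (nN ^+ 2) (colf 7 (tokf R t)).
Proof.
have N1 := n1; apply: intmx_colf => c hc.
have ht : (nat_of_ord t)%:R + 1 <= nN by rewrite nNE natr1 ler_nat.
have t0 : 0 <= (nat_of_ord t)%:R :> R by [].
have tsq : (nat_of_ord t)%:R ^+ 2 <= nN ^+ 2 :> R by rewrite ler_pXn2r ?nnegrE //; lra.
have := nsq.
have := sqr_ge0 ((nat_of_ord t)%:R : R).
by do 7?[case: c hc => [|c] hc] => //= ? ?; intb_solve.
Qed.
Lemma hPos (k : 'I_(n.*2).+1) : intmx (9 * nN ^+ 2) (colf 7 (posf R k)).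
Proof.
have N1 := n1; apply: intmx_colf => c hc.
have hk : (nat_of_ord k)%:R <= 2 * nN.
  by rewrite nNE -natrM ler_nat mul2n -ltnS ltn_ord.
have k0 : 0 <= (nat_of_ord k)%:R :> R by [].
have ksq : (nat_of_ord k)%:R ^+ 2 <= (2 * nN) ^+ 2 :> R by rewrite ler_pXn2r ?nnegrE //; lra.
rewrite exprMn in ksq.
have o0 : 0 <= (odd k)%:R :> R by [].
have o1 : (odd k)%:R <= 1 :> R by case: (odd k).
have := nsq.
have := sqr_ge0 ((nat_of_ord k)%:R : R).
by do 7?[case: c hc => [|c] hc] => //= ? ?; intb_solve.
Qed.
End W.
End Prec.



Section P.
Variable R : realType.

Lemma TT_prec n b : (0 < n)%N -> (0 < b)%N -> 2 ^+ 24 * n%:R ^+ 5 <= 2 ^+ b :> R ->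
  precision_ok b (TT R n).
Proof.
move=> n0 b0 Bb.
set nN : R := n%:R.
have nNE : nN = n%:R by [].
have n1 : 1 <= nN by rewrite ler1n.
set BB : R := 2 ^+ 24 * nN ^+ 5.
have nsq0 : 0 <= nN ^+ 2 by apply: exprn_ge0; lra.
have leBB : forall (C : R) k, (k <= 5)%N -> 0 <= C -> C <= 2 ^+ 24 -> C * nN ^+ k <= BB.
  move=> C k hk C0 C1; rewrite /BB.
  have h1 := @natpow_le R nN k n1 hk.
  have h0 : 0 <= nN ^+ k by apply: exprn_ge0; lra.
  have h5 : 0 <= nN ^+ 5 by apply: exprn_ge0; lra.
  apply: le_trans (ler_wpM2l C0 h1) _.
  by apply: ler_wpM2r.
have hX0 : forall f pi istar k, intmx (nN ^+ 2 + 9 * nN ^+ 2) (X0 (TT R n) f pi istar k).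
  by move=> f pi istar k; rewrite /X0 /=; apply: intmx_add; [apply: (@hTok R n nN nNE n1) | apply: (@hPos R n nN nNE n1)].
set xb := nN ^+ 2 + 9 * nN ^+ 2.
have xbE : xb = 10 * nN ^+ 2 by rewrite /xb; ring.
have xb0 : 0 <= xb by rewrite xbE; lra.
set x1b : R := xb + 7%:R * (1 * xb).
have x1bE : x1b = 80 * nN ^+ 2 by rewrite /x1b xbE; ring.
have hX1 : forall f pi istar k, intmx x1b (X1 (TT R n) f pi istar k).
  move=> f pi istar k; rewrite /X1 attn_applyE /=; apply: intmx_add => //.
  apply: intmx_match; first by rewrite /x1b; lra.
  by move=> j; apply: intmx_mul; [apply: (hV1 R) | apply: hX0].
set x2b : R := 0 + 7%:R * (1 * x1b).
have x2bE : x2b = 560 * nN ^+ 2 by rewrite /x2b x1bE; ring.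
have hX2 : forall f pi istar k, intmx x2b (X2 (TT R n) f pi istar k).
  move=> f pi istar k; rewrite /X2 attn_applyE /=; apply: intmx_add; first exact: intmx0.
  apply: intmx_match; first by rewrite x1bE; lra.
  by move=> j; apply: intmx_mul; [apply: (hV2 R) | apply: hX1].
have leBB0 : forall C : R, 0 <= C -> C <= 2 ^+ 24 -> C <= BB.
  by move=> C h0 h1; have := leBB C 0%N isT h0 h1; rewrite expr0 mulr1.
split.
  split.
  - move=> t; apply: reprmx_intmx Bb; apply: intmx_le (@hTok R n nN nNE n1 t).
    by rewrite -[X in X <= _]mul1r; apply: leBB => //; lra.
  - move=> k; apply: reprmx_intmx Bb; apply: intmx_le (@hPos R n nN nNE n1 k).
    by apply: leBB => //; lra.
  - split; apply: reprmx_intmx Bb;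
      [apply: intmx_le (hQ1 R) | apply: intmx_le (hK1 R) | apply: intmx_le (hV1 R)];
      apply: leBB0; lra.
  - split; apply: reprmx_intmx Bb;
      [apply: intmx_le (@hQ2 R n nN nNE n1) | apply: intmx_le (hK2 R) | apply: intmx_le (hV2 R)].
    + have -> : 8 * nN = 8 * nN ^+ 1 by rewrite expr1.
      by apply: leBB => //; lra.
    + by apply: leBB0; lra.
    + by apply: leBB0; lra.
  - by apply: reprmx_intmx Bb; apply: intmx_le (@hU R n nN nNE n1); apply: leBB => //; lra.
move=> f pi istar.
split.
- move=> k; apply: reprmx_intmx Bb; apply: intmx_le (hX0 f pi istar k).
  by rewrite -/xb xbE; apply: leBB => //; lra.
- apply: (@layer_run_ok R b BB (lay1 R) _ _ 4 1 1 xb) => //.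
  + exact: (hQ1 R).
  + exact: (hK1 R).
  + exact: (hV1 R).
  + by rewrite xbE (_ : _ * _ = (7 * 4 * 10) * nN ^+ 2); [apply: leBB => //; lra | ring].
  + by rewrite xbE (_ : _ * _ = (7 * 10) * nN ^+ 2); [apply: leBB => //; lra | ring].
  + by rewrite xbE (_ : _ * _ = (7 * 10) * nN ^+ 2); [apply: leBB => //; lra | ring].
  + by rewrite xbE (_ : _ * _ = (4 * 7 * 4 * 10 * 7 * 10) * nN ^+ 4); [apply: leBB => //; lra | ring].
- move=> k; apply: reprmx_intmx Bb; apply: intmx_le (hX1 f pi istar k).
  by rewrite x1bE; apply: leBB => //; lra.
- apply: (@layer_run_ok R b BB (lay2 R n) _ _ (8 * nN) 1 1 x1b) => //.
  + exact: (@hQ2 R n nN nNE n1).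
  + exact: (hK2 R).
  + exact: (hV2 R).
  + by rewrite x1bE (_ : _ * _ = (7 * 8 * 80) * nN ^+ 3); [apply: leBB => //; lra | ring].
  + by rewrite x1bE (_ : _ * _ = (7 * 80) * nN ^+ 2); [apply: leBB => //; lra | ring].
  + by rewrite x1bE (_ : _ * _ = (7 * 80) * nN ^+ 2); [apply: leBB => //; lra | ring].
  + by rewrite x1bE (_ : _ * _ = (4 * 7 * 8 * 80 * 7 * 80) * nN ^+ 5); [apply: leBB => //; lra | ring].
split.
  move=> k; apply: reprmx_intmx Bb; apply: intmx_le (hX2 f pi istar k).
  by rewrite x2bE; apply: leBB => //; lra.
apply: reprmx_intmx Bb; rewrite /logits /=.
have := @intmx_mul R _ _ _ _ _ _ _ (@hU R n nN nNE n1) (hX2 f pi istar ord_max) => h; apply: intmx_le h.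
by rewrite x2bE (_ : _ * _ = (7 * 2 * 560) * nN ^+ 4); [apply: leBB => //; lra | ring].
Qed.
End P.



Theorem theorem9 (R : realType) :
  exists C : nat, forall n : nat, (0 < n)%N ->
  exists T : transformer2 R n,
    precision_ok (C * (trunc_log 2 n).+1) T /\
    forall (f : 'I_n -> 'I_n) (pi : {perm 'I_n}) (istar : 'I_n),
      output T f pi istar = Some (f istar).
Proof.
exists 30%N => n n0; exists (TT R n); split; last first.
  by move=> f pi istar; apply: outE.
apply: TT_prec => //; try by rewrite muln_gt0.
set L := trunc_log 2 n.
have hn : (n < 2 ^ L.+1)%N := trunc_log_ltn n (isT : (1 < 2)%N).
rewrite -!natrX -natrM ler_nat.
have h1 : (n ^ 5 <= 2 ^ (L.+1 * 5))%N by rewrite expnM leq_exp2r // ltnW.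
have h2 : (2 ^ 24 <= 2 ^ (25 * L.+1))%N.
  by apply: leq_pexp2l => //; rewrite mulnS (leq_trans _ (leq_addr _ _)).
apply: leq_trans (leq_mul h2 h1) _.
by rewrite -expnD [(L.+1 * 5)%N]mulnC -mulnDl.
Qed.
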